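(* For $n\geq 2$, the number of 2-Jacobi subsets of $S_n$ equals $2^{(n-1)!\cdot(n-1)}$.
   Context: The left-normed bracket is $[a_1]=a_1$, $[a_1,\dots,a_n]=[[a_1,\dots,a_{n-1}],a_n]$. $S_n$ is the symmetric group on $\{1,\dots,n\}$. A subset $T\subseteq S_n$ is 2-Jacobi if $\sum_{\sigma\in T}[a_{\sigma(1)},\dots,a_{\sigma(n)}]=0$ for all elements $a_1,\dots,a_n$ of every Lie algebra over the field $\mathbb Z/2$. *)

(* Defs.v *)
From HB Require Import structures.
From mathcomp Require Import all_boot all_order all_algebra all_fingroup.
Set Implicit Arguments. Unset Strict Implicit. Unset Printing Implicit Defensive.
Import GRing.Theory.
Local Open Scope ring_scope.

Definition is_lie_bracket (V : lmodType 'F_2) (br : V -> V -> V) : Prop :=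
  (forall x y z, br (x + y) z = br x z + br y z) /\
  (forall x y z, br x (y + z) = br x y + br x z) /\
  (forall (c : 'F_2) x y, br (c *: x) y = c *: br x y) /\
  (forall (c : 'F_2) x y, br x (c *: y) = c *: br x y) /\
  (forall x, br x x = 0) /\
  (forall x y z, br x (br y z) + br y (br z x) + br z (br x y) = 0).

(* left-normed bracket [a_1, ..., a_k] = [[a_1,...,a_{k-1}], a_k];
   the empty list is sent to 0 (never used for n >= 1). *)
Definition lnbracket (V : lmodType 'F_2) (br : V -> V -> V) (s : seq V) : V :=
  match s with
  | [::] => 0
  | x :: s' => foldl br x s'
  end.

(* [a_{sigma(1)}, ..., a_{sigma(n)}], indices 0..n-1 *)
Definition perm_bracket n (V : lmodType 'F_2) (br : V -> V -> V)
  (a : 'I_n -> V) (s : 'S_n) : V :=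
  lnbracket br [seq a (s i) | i <- enum 'I_n].

Definition two_Jacobi n (T : {set 'S_n}) : Prop :=
  forall (V : lmodType 'F_2) (br : V -> V -> V), is_lie_bracket br ->
  forall a : 'I_n -> V, \sum_(s in T) perm_bracket br a s = 0.

(* Main.v *)
Require Import Defs.
From mathcomp Require Import all_boot all_order all_algebra all_fingroup.
Set Implicit Arguments. Unset Strict Implicit. Unset Printing Implicit Defensive.
Import GRing.Theory.
Local Open Scope ring_scope.

Lemma F2_11 : (1 + 1 : 'F_2) = 0.
Proof. by apply/val_inj. Qed.

Section LieFacts.
Variables (V : lmodType 'F_2) (br : V -> V -> V).
Hypothesis hbr : is_lie_bracket br.

Lemma addxx (x : V) : x + x = 0.
Proof. by rewrite -[x]scale1r -scalerDl F2_11 scale0r. Qed.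

Lemma oppV (x : V) : - x = x.
Proof. by apply/eqP; rewrite eq_sym -subr_eq0 opprK addxx. Qed.

Lemma mulnF2 (x : V) k : x *+ k = x *+ odd k.
Proof.
elim: k => [|k IH] //; rewrite mulrS IH /=.
by case: (odd k) => /=; rewrite ?mulr1n ?mulr0n ?addxx ?addr0.
Qed.

Lemma br0r x : br x 0 = 0.
Proof.
case: hbr => _ [h2 _]; have h := h2 x 0 0; rewrite addr0 in h.
by rewrite h addxx.
Qed.

Lemma br0l x : br 0 x = 0.
Proof.
case: hbr => h1 _; have h := h1 0 0 x; rewrite addr0 in h.
by rewrite h addxx.
Qed.

Lemma brC x y : br x y = br y x.
Proof.
case: hbr => h1 [h2 [_ [_ [h5 _]]]].
have := h5 (x + y); rewrite h1 !h2 !h5 add0r addr0 => /eqP.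
by rewrite addr_eq0 oppV => /eqP.
Qed.

Lemma brJ c y z : br c (br y z) = br (br c y) z + br (br c z) y.
Proof.
case: hbr => _ [_ [_ [_ [_ h6]]]].
have := h6 c y z => /eqP; rewrite -addrA addr_eq0 oppV => /eqP ->.
by rewrite addrC (brC z) (brC y) (brC z c).
Qed.

Lemma br_suml (I : Type) (l : seq I) (f : I -> V) y :
  br (\sum_(i <- l) f i) y = \sum_(i <- l) br (f i) y.
Proof.
case: hbr => h1 _.
elim: l => [|i l IH]; first by rewrite !big_nil br0l.
by rewrite !big_cons h1 IH.
Qed.

Lemma foldl_suml (I : Type) (l : seq I) (s : seq V) (f : I -> V) :
  foldl br (\sum_(i <- l) f i) s = \sum_(i <- l) foldl br (f i) s.
Proof.
elim: s f => [|x s IH] f //=.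
by rewrite br_suml IH.
Qed.

End LieFacts.
Section Sym.
Variable n : nat.

Fixpoint symr (r : seq 'I_n) : seq (seq 'I_n) :=
  match r with
  | [::] => [::]
  | x :: r' => if r' is [::] then [:: [:: x]]
               else [seq rcons w x | w <- symr r'] ++ [seq x :: w | w <- symr r']
  end.

Lemma symr_perm r w : w \in symr r -> perm_eq w r.
Proof.
elim: r w => [|x r IH] w //=.
case: r IH => [|y r] IH; first by rewrite inE => /eqP ->.
rewrite mem_cat => /orP [] /mapP [w' /IH hw ->].
  by rewrite perm_rcons perm_cons.
by rewrite perm_cons.
Qed.

Variables (V : lmodType 'F_2) (br : V -> V -> V).
Hypothesis hbr : is_lie_bracket br.

Lemma lnbracket_rcons s v : s != [::] ->
  lnbracket br (rcons s v) = br (lnbracket br s) v.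
Proof. by case: s => [|x s] //= _; rewrite foldl_rcons. Qed.

Lemma lnbracket_cat s t : s != [::] ->
  lnbracket br (s ++ t) = foldl br (lnbracket br s) t.
Proof. by case: s => [|x s] //= _; rewrite foldl_cat. Qed.

Lemma symr_ok (a : 'I_n -> V) r c :
  br c (lnbracket br (map a (rev r))) = \sum_(w <- symr r) foldl br c (map a w).
Proof.
elim: r c => [|x r IH] c /=; first by rewrite big_nil br0r.
case: r IH => [|y r] IH; first by rewrite big_seq1.
rewrite rev_cons map_rcons lnbracket_rcons; last first.
  by rewrite -size_eq0 size_map size_rev.
rewrite (brJ hbr) IH (br_suml hbr) -/(symr (y :: r)).
rewrite IH big_cat !big_map /=; congr (_ + _).
by apply: eq_bigr => w _; rewrite map_rcons foldl_rcons.
Qed.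

Definition word (s : 'S_n) := [seq s i | i <- enum 'I_n].

Lemma pbE a s : perm_bracket br a s = lnbracket br (map a (word s)).
Proof. by rewrite /perm_bracket /word; congr lnbracket; elim: (enum _) => //= x l ->. Qed.

End Sym.

Lemma word_inj n : injective (@word n).
Proof.
move=> s t h; apply/permP => i.
have := congr1 (nth i ^~ i) h.
by rewrite /word !(nth_map i) -?enumT ?size_enum_ord ?ltn_ord // nth_ord_enum.
Qed.

Lemma word_perm n (s : 'S_n) : perm_eq (word s) (enum 'I_n).
Proof.
apply: uniq_perm.
- by rewrite map_inj_uniq ?enum_uniq //; apply: perm_inj.
- exact: enum_uniq.
move=> x; rewrite mem_enum; apply/mapP; exists (s^-1 x)%g; first by rewrite mem_enum.
by rewrite permKV.
Qed.

Lemma word_ex m (w : seq 'I_m.+1) : perm_eq w (enum 'I_m.+1) -> exists s, w = word s.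
Proof.
move=> hw.
have sz : size w = m.+1 by rewrite (perm_size hw) size_enum_ord.
have uw : uniq w by rewrite (perm_uniq hw) enum_uniq.
have finj : injective (fun i : 'I_m.+1 => nth i w i).
  move=> i j /= h; apply/val_inj/eqP.
  rewrite -(nth_uniq i _ _ uw) ?sz ?ltn_ord //.
  by rewrite h (set_nth_default j) // sz ltn_ord.
exists (perm finj); apply: (@eq_from_nth _ ord0).
  by rewrite size_map size_enum_ord.
move=> k; rewrite sz => hk.
rewrite (nth_map ord0) ?size_enum_ord // permE /= nth_enum_ord //.
by apply: set_nth_default; rewrite sz.
Qed.

Section Decomp.
Variable m : nat.
Local Notation I := 'I_m.+1.

Definition D (u : seq I) : seq (seq I) :=
  let j := index ord0 u in
  if j == 0%N then [:: u]
  else [seq ord0 :: w ++ drop j.+1 u | w <- symr (rev (take j u))].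

Lemma D_split (u : seq I) : ord0 \in u ->
  u = take (index ord0 u) u ++ ord0 :: drop (index ord0 u).+1 u.
Proof.
move=> hu; rewrite -{1}(cat_take_drop (index ord0 u) u); congr (_ ++ _).
by rewrite (drop_nth ord0) ?index_mem // nth_index.
Qed.

Lemma D_prop (u w : seq I) : ord0 \in u -> w \in D u ->
  perm_eq w u /\ head ord0 w = ord0.
Proof.
move=> hu; rewrite /D; case: ifP => [/eqP h0|h0].
  rewrite inE => /eqP ->; split => //.
  move: (nth_index ord0 hu); rewrite h0; by case: u hu {h0}.
case/mapP => w' /symr_perm hw' ->; split => //.
rewrite [in X in perm_eq _ X](D_split hu).
rewrite -cat1s perm_catCA /= perm_cat2r.
by rewrite (permPl hw') perm_rev.
Qed.

Variables (V : lmodType 'F_2) (br : V -> V -> V).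
Hypothesis hbr : is_lie_bracket br.

Lemma D_ok (a : I -> V) (u : seq I) : ord0 \in u ->
  lnbracket br (map a u) = \sum_(w <- D u) lnbracket br (map a w).
Proof.
move=> hu; rewrite /D; case: ifP => [_|h0]; first by rewrite big_seq1.
rewrite {1}(D_split hu) map_cat lnbracket_cat; last first.
  by rewrite -size_eq0 size_map size_take index_mem hu h0.
rewrite /= (brC hbr) -[take _ u]revK (symr_ok hbr) (foldl_suml hbr) big_map.
rewrite revK; apply: eq_bigr => w _ /=; by rewrite map_cat foldl_cat.
Qed.

End Decomp.

Lemma sum_words (V : zmodType) m (f : seq 'I_m.+1 -> V) l :
  (forall w, w \in l -> exists s, w = word s) ->
  \sum_(w <- l) f w = \sum_(s : 'S_m.+1) f (word s) *+ count_mem (word s) l.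
Proof.
elim: l => [|w l IH] hl.
  by rewrite big_nil big1 // => s _; rewrite mulr0n.
have [s0 ->] := hl w (mem_head _ _).
rewrite big_cons IH; last by move=> w' h; apply: hl; rewrite inE h orbT.
rewrite [RHS](eq_bigr (fun s => f (word s) *+ (word s0 == word s) + f (word s) *+ count_mem (word s) l)); last by move=> s _; rewrite /= mulrnDr.
rewrite big_split /=; congr (_ + _).
rewrite (bigD1 s0) //= eqxx mulr1n big1 ?addr0 // => s /negbTE hs.
by rewrite (inj_eq (@word_inj _)) eq_sym hs mulr0n.
Qed.

Section Rs.
Variable m : nat.
Local Notation I := 'I_m.+1.

Definition Cset : {set 'S_m.+1} := [set s : 'S_m.+1 | s ord0 == ord0].
Definition Rs (s : 'S_m.+1) : {set 'S_m.+1} :=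
  [set t | odd (count_mem (word t) (D (word s)))].

Lemma ord0_word (s : 'S_m.+1) : ord0 \in word s.
Proof.
apply/mapP; exists (s^-1 ord0)%g; first by rewrite mem_enum.
by rewrite permKV.
Qed.

Lemma head_word (s : 'S_m.+1) : head ord0 (word s) = s ord0.
Proof. by rewrite /word enum_ordSl. Qed.

Lemma Rs_sub s : Rs s \subset Cset.
Proof.
apply/subsetP => t; rewrite !inE => h.
have: word t \in D (word s) by rewrite -has_pred1 has_count; case: (count _ _) h.
case/(D_prop (ord0_word s)) => _; rewrite head_word => ->; exact: eqxx.
Qed.

Lemma Rs_C s : s \in Cset -> Rs s = [set s].
Proof.
rewrite inE => hs; apply/setP => t; rewrite !inE /D.
have -> : index ord0 (word s) = 0%N.
  by rewrite /word enum_ordSl /= (eqP hs) eqxx.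
rewrite /= addn0 (inj_eq (@word_inj _)) eq_sym.
by case: (t == s).
Qed.

Lemma Rs_ok (V : lmodType 'F_2) (br : V -> V -> V) (hbr : is_lie_bracket br)
  (a : I -> V) s :
  perm_bracket br a s = \sum_(t in Rs s) perm_bracket br a t.
Proof.
rewrite pbE (D_ok hbr _ (ord0_word s)) sum_words; last first.
  move=> w /(D_prop (ord0_word s)) [hw _]; apply: word_ex.
  by rewrite (permPl hw) word_perm.
rewrite [RHS]big_mkcond; apply: eq_bigr => t _; rewrite inE mulnF2 pbE.
by case: (odd _).
Qed.

End Rs.

Lemma zid (Z : zmodType) (a b c d e f : Z) :
  (a - b - (c - d)) + (c - e - (f - b)) + (f - d - (a - e)) = 0.
Proof.
rewrite !opprB !addrA addrNK subrK.
rewrite (addrAC _ (-e) b) (addrAC _ d b) subrK.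
by rewrite (addrAC _ (-e) (-d)) addrK subrK subrr.
Qed.

Section Model.
Variable m : nat.
Local Notation M := 'M['F_2]_m.+2.

Definition brm (A B : M) : M := A *m B - B *m A.

Lemma lie_brm : is_lie_bracket brm.
Proof.
rewrite /is_lie_bracket /brm; split; [|split; [|split; [|split; [|split]]]].
- by move=> x y z; rewrite mulmxDl mulmxDr opprD addrACA.
- by move=> x y z; rewrite mulmxDr mulmxDl opprD addrACA.
- by move=> c x y; rewrite -scalemxAl -scalemxAr scalerBr.
- by move=> c x y; rewrite -scalemxAl -scalemxAr scalerBr.
- by move=> x; exact: subrr.
- by move=> x y z; rewrite !mulmxBr !mulmxBl !mulmxA; exact: zid.
Qed.

Variable tau : 'S_m.+1.
Hypothesis htau : tau ord0 = ord0.

Definition Xm (i : 'I_m.+1) : M :=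
  delta_mx (inord (tau^-1 i)%g) (inord (tau^-1 i)%g.+1).

Definition ev k : 'rV['F_2]_m.+2 := \row_(j < m.+2) ((j : nat) == k)%:R.

Lemma ev_delta k (p q : 'I_m.+2) :
  ev k *m delta_mx p q = ev q *+ ((p : nat) == k).
Proof.
apply/rowP => j; rewrite !mxE (bigD1 p) //= big1; last first.
  by move=> l /negbTE hl; rewrite !mxE hl mulr0.
rewrite !mxE eqxx /= addr0 mulmxnE mxE.
by case: (p == k :> nat); rewrite ?mulr0n ?mulr1n ?mul0r ?mul1r.
Qed.

Lemma ev_X k i :
  ev k *m Xm i = ev (tau^-1 i)%g.+1 *+ (((tau^-1 i)%g : nat) == k).
Proof.
have := ltn_ord (tau^-1 i)%g => hl.
by rewrite /Xm ev_delta !inordK //; apply: (leq_trans hl).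
Qed.

Lemma foldl_mulb (l : seq 'I_m.+1) v (b : bool) :
  foldl (fun (v : 'rV['F_2]_m.+2) i => v *m Xm i) (v *+ b) l = foldl (fun (v : 'rV['F_2]_m.+2) i => v *m Xm i) v l *+ b.
Proof.
case: b; rewrite ?mulr1n ?mulr0n //.
by elim: l => [|i l IH] //=; rewrite mul0mx.
Qed.

Lemma fold_ev k l :
  foldl (fun (v : 'rV['F_2]_m.+2) i => v *m Xm i) (ev k) l =
  ev (k + size l)%N *+ ([seq ((tau^-1 i)%g : nat) | i <- l] == iota k (size l)).
Proof.
elim: l k => [|i l IH] k /=; first by rewrite addn0 mulr1n.
rewrite ev_X foldl_mulb IH eqseq_cons.
have [<-|hne] := eqVneq ((tau^-1 i)%g : nat) k.
  by rewrite /= mulr1n addSnnS.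
by rewrite /= mulr0n.
Qed.

Lemma tau_ne0 (i : 'I_m.+1) : i != ord0 -> ((tau^-1 i)%g : nat) != 0%N.
Proof.
move=> hi; apply/negP => /eqP h.
have h' : (tau^-1 i)%g = ord0 by apply: val_inj.
by move: hi; rewrite -(permKV tau i) h' htau eqxx.
Qed.

Lemma e0_foldl A l : ord0 \notin l ->
  ev 0 *m foldl brm A (map Xm l) = foldl (fun (v : 'rV['F_2]_m.+2) i => v *m Xm i) (ev 0 *m A) l.
Proof.
elim: l A => [|i l IH] A //=; rewrite inE negb_or => /andP [hi hl].
rewrite IH // /brm mulmxBr !mulmxA ev_X.
have hi' : i != ord0 by rewrite eq_sym.
by rewrite (negbTE (tau_ne0 hi')) mulr0n mul0mx subr0.
Qed.

Lemma model_val (rho : 'S_m.+1) : rho ord0 = ord0 ->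
  ev 0 *m perm_bracket brm Xm rho = ev m.+1 *+ (rho == tau).
Proof.
move=> hrho; rewrite pbE.
have hu : uniq (word rho) by rewrite (perm_uniq (word_perm rho)) enum_uniq.
have hsz : size (word rho) = m.+1 by rewrite size_map size_enum_ord.
have hh := head_word rho.
have -> : (rho == tau) =
    ([seq ((tau^-1 i)%g : nat) | i <- word rho] == iota 0 m.+1).
  rewrite -val_enum_ord /word -map_comp.
  apply/eqP/eqP => [->|h].
    by apply: eq_map => j /=; rewrite permK.
  apply/permP => j.
  have hj : (tau^-1 (rho j))%g = j.
    apply: val_inj; move/eq_in_map: h; apply; exact: mem_enum.
  by rewrite -[in RHS]hj permKV.
case: (word rho) hu hsz hh => [|x l] //= /andP [hx _] [hsz] hx0.
rewrite hx0 hrho in hx.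
rewrite e0_foldl //; have /= -> := fold_ev 0 (x :: l).
by rewrite hsz.
Qed.

End Model.

Section Final.
Variable m : nat.
Local Notation S := 'S_m.+1.

Definition cnt (T : {set S}) t := #|[set s in T | t \in Rs s]|.
Definition cset (T : {set S}) : {set S} := [set t | odd (cnt T t)].

Lemma sum_cset (V : lmodType 'F_2) (br : V -> V -> V) (hbr : is_lie_bracket br)
  (a : 'I_m.+1 -> V) (T : {set S}) :
  \sum_(s in T) perm_bracket br a s = \sum_(t in cset T) perm_bracket br a t.
Proof.
rewrite (eq_bigr _ (fun s _ => Rs_ok hbr a s)).
rewrite (exchange_big_dep predT) //=.
rewrite [RHS]big_mkcond; apply: eq_bigr => t _.
rewrite (eq_bigl (fun s => s \in [set s in T | t \in Rs s])); last by move=> s; rewrite !inE.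
by rewrite sumr_const mulnF2 inE /cnt; case: odd.
Qed.

Lemma cset_sub (T : {set S}) : cset T \subset Cset m.
Proof.
apply/subsetP => t; rewrite inE /cnt => h.
have : (0 < #|[set s in T | t \in Rs s]|)%N by case: #|_| h.
case/card_gt0P => s; rewrite inE => /andP [_ hs].
exact: (subsetP (Rs_sub s)).
Qed.

Lemma J_iff (T : {set S}) : two_Jacobi T <-> cset T = set0.
Proof.
split; last first.
  by move=> hc V br hbr a; rewrite (sum_cset hbr) hc big_set0.
move=> hJ; apply/setP => t; rewrite inE in_set0; apply/negbTE/negP => ht.
have htc : t \in cset T by rewrite inE.
have htC := subsetP (cset_sub T) t htc.
have := hJ _ _ (lie_brm m) (Xm t); rewrite (sum_cset (lie_brm m)) => h0.
have := congr1 (fun A => ev m 0 *m A) h0; rewrite /= mulmx0 mulmx_sumr.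
rewrite (eq_bigr (fun r => ev m m.+1 *+ (r == t))); last first.
  move=> r hr; apply: model_val; first by move: htC; rewrite inE => /eqP.
  by move: (subsetP (cset_sub T) r hr); rewrite inE => /eqP.
rewrite (bigD1 t) //= eqxx mulr1n big1 ?addr0; last first.
  by move=> r /andP [_ /negbTE ->]; rewrite mulr0n.
move/(congr1 (fun v : 'rV['F_2]_m.+2 => v 0 ord_max)); rewrite !mxE /= eqxx => /eqP.
by rewrite oner_eq0.
Qed.

Lemma cnt_split (T : {set S}) (t : S) : t \in Cset m -> cnt T t = ((t \in T) + cnt (T :\: Cset m) t)%N.
Proof.
move=> htC; rewrite /cnt -(cardsID (Cset m) [set s in T | t \in Rs s]).
congr (_ + _)%N.
  have -> : [set s in T | t \in Rs s] :&: Cset m = T :&: [set t].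
    apply/setP => s; rewrite in_setI [in RHS]in_setI in_set1.
    have [hs|hs] := boolP (s \in Cset m).
      by rewrite andbT in_set (Rs_C hs) in_set1 eq_sym.
    rewrite andbF; case: eqP => [hst|]; last by rewrite andbF.
    by move: hs; rewrite hst htC.
  have [hT|hT] := boolP (t \in T).
    by rewrite (setIidPr _) ?sub1set // cards1.
  rewrite (_ : T :&: [set t] = set0) ?cards0 //.
  apply/setP => x; rewrite !inE; case: eqP => [->|]; last by rewrite andbF.
  by rewrite (negbTE hT).
by apply: eq_card => s; rewrite !inE andbA.
Qed.

Lemma key (T : {set S}) (t : S) : t \in Cset m ->
  odd (cnt T t) = (t \in T) (+) odd (cnt (T :\: Cset m) t).
Proof. by move=> h; rewrite cnt_split // oddD; case: (t \in T). Qed.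

Definition gU (U : {set S}) : {set S} := U :|: [set t in Cset m | odd (cnt U t)].

Lemma A_char (T : {set S}) : (cset T == set0) = (T == gU (T :\: Cset m)).
Proof.
apply/eqP/eqP => h.
  apply/setP => t; rewrite in_setU in_setD.
  have [htC|htC] := boolP (t \in Cset m).
    rewrite /= inE htC /=.
    have := congr1 (fun A : {set S} => t \in A) h; rewrite /= inE in_set0 key //.
    by case: (t \in T); case: (odd _).
  by rewrite /= inE (negbTE htC) orbF.
apply/setP => t; rewrite inE in_set0.
have [htC|htC] := boolP (t \in Cset m); last first.
  apply/negbTE/negP => ho; move: htC; rewrite (subsetP (cset_sub T) t) //.
  by rewrite inE.
rewrite key // {1}h in_setU in_setD htC /= inE htC /=.
by rewrite addbb.
Qed.

Lemma gK (U : {set S}) : U \subset ~: Cset m -> gU U :\: Cset m = U.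
Proof.
move=> hU; apply/setP => t.
have [htC|htC] := boolP (t \in Cset m); rewrite in_setD in_setU htC /=.
  apply/esym/negbTE/negP => /(subsetP hU); by rewrite in_setC htC.
have -> : (t \in [set t0 in Cset m | odd (cnt U t0)]) = false.
  by apply/negbTE; apply: contra htC; rewrite in_set => /andP [].
by rewrite orbF.
Qed.

Lemma card_A : #|[set T : {set S} | cset T == set0]| = (2 ^ #|~: Cset m|)%N.
Proof.
rewrite -card_powerset.
have -> : [set T : {set S} | cset T == set0] = gU @: powerset (~: Cset m).
  apply/setP => T; rewrite inE A_char; apply/eqP/imsetP => [hT|[U hU ->]].
    by exists (T :\: Cset m) => //; rewrite powersetE setDE subsetIr.
  by rewrite powersetE in hU; rewrite gK.
apply: card_in_imset => U1 U2; rewrite !powersetE => h1 h2 e.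
by rewrite -(gK h1) e gK.
Qed.

Lemma card_notC : #|~: Cset m| = (m`! * m)%N.
Proof.
have hC : #|Cset m| = m`!.
  rewrite -[RHS]/((m.+1).-1)`! -[m.+1 in RHS](card_ord m.+1) -(cardsC1 (@ord0 m)).
  rewrite -(card_perm [set~ (@ord0 m)]); apply: eq_card => s.
  rewrite inE /perm_on /=; apply/eqP/subsetP => [h x|h].
    rewrite inE in_setC1 => hx; apply: contra hx => /eqP ->; exact/eqP.
  apply/eqP; apply/negP => hs.
  by have := h ord0; rewrite inE in_setC1 eqxx => /(_ (introN idP hs)).
have := cardsC (Cset m); rewrite card_Sn hC factS => e.
apply/eqP; rewrite -(eqn_add2l m`!) e mulSn mulnC //.
Qed.

End Final.

Local Close Scope ring_scope.

Theorem corollary2 (n : nat) (hn : 2 <= n) :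
  exists A : {set {set 'S_n}},
    (forall T : {set 'S_n}, T \in A <-> two_Jacobi T) /\
    #|A| = 2 ^ ((n.-1)`! * n.-1).
Proof.
case: n hn => [|[|m]] // _.
exists [set T : {set 'S_m.+2} | cset T == set0]; split.
  move=> T; rewrite inE; split => [/eqP|]; first by move=> h; apply/J_iff.
  by move/J_iff => ->.
by rewrite card_A card_notC.
Qed.
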